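(* Suppose $m=n$, $\Xi=\{\boldsymbol{\xi}\in\mathbb{R}^m:(\boldsymbol{\xi}-\boldsymbol{\xi}_0)^{\top}\boldsymbol{W}^{-1}(\boldsymbol{\xi}-\boldsymbol{\xi}_0)\le1\}$ with $\boldsymbol{W}\succ0$, and $f_t(\boldsymbol{x},\boldsymbol{\xi})=\boldsymbol{\xi}^{\top}\boldsymbol{x}+\langle\boldsymbol{A}^t,\boldsymbol{\xi}\boldsymbol{\xi}^{\top}\rangle+(\boldsymbol{b}^t)^{\top}\boldsymbol{x}+h^t$ for all $t\in[T]$, where $\boldsymbol{A}^t\succeq0$, $\boldsymbol{b}^t\in\mathbb{R}^n$, $h^t\in\mathbb{R}$. Let $\tilde Z_{C_2}$ be the set of $\boldsymbol{x}\in\mathbb{R}^n$ for which there exist $\alpha_t>0$, $q_{it}\ge0$, $\boldsymbol{v}_{it}\in\mathbb{R}^m$ ($i\in[N],t\in[T]$) with, for all $i,t$, $\|\boldsymbol{v}_{it}\|_*\delta+\frac1N\sum_{j=1}^Nq_{jt}\le\epsilon\alpha_t$ and $\sup_{\boldsymbol{\xi}\in\Xi}[\boldsymbol{v}_{it}^{\top}\boldsymbol{\xi}-f_t(\boldsymbol{x},\boldsymbol{\xi})]+\alpha_t-\boldsymbol{v}_{it}^{\top}\boldsymbol{\zeta}^i-q_{it}\le0$. Then $\tilde Z_{C_2}$ equals the set of $\boldsymbol{x}\in\mathbb{R}^n$ for which there exist $\alpha_t>0$, $q_{it}\ge0$, $\boldsymbol{v}_{it}\in\mathbb{R}^m$,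 $u_{it}\in\mathbb{R}$, $\nu_{it}\ge0$ such that for all $i\in[N],t\in[T]$: $$\|\boldsymbol{v}_{it}\|_*\delta+\frac1N\sum_{j=1}^Nq_{jt}\le\epsilon\alpha_t,\qquad u_{it}-[(\boldsymbol{b}^t)^{\top}\boldsymbol{x}+h^t]+\alpha_t-\boldsymbol{v}_{it}^{\top}\boldsymbol{\zeta}^i\le q_{it},$$ $$\begin{bmatrix}\boldsymbol{A}^t+\nu_{it}\boldsymbol{W}^{-1}&-\frac12(2\nu_{it}\boldsymbol{W}^{-1}\boldsymbol{\xi}_0+\boldsymbol{v}_{it}-\boldsymbol{x})\\-\frac12(2\nu_{it}\boldsymbol{W}^{-1}\boldsymbol{\xi}_0+\boldsymbol{v}_{it}-\boldsymbol{x})^{\top}&u_{it}+\nu_{it}\boldsymbol{\xi}_0^{\top}\boldsymbol{W}^{-1}\boldsymbol{\xi}_0-\nu_{it}\end{bmatrix}\succeq0.$$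
   Context: Setting: $\epsilon\in(0,1)$, $\delta>0$, $[T]=\{1,\dots,T\}$; $\boldsymbol{\zeta}^1,\dots,\boldsymbol{\zeta}^N\in\Xi$ given samples; $\|\cdot\|_*$ is the dual norm of a norm on $\mathbb{R}^m$; $\langle\boldsymbol{X},\boldsymbol{Y}\rangle=\mathrm{tr}(\boldsymbol{X}\boldsymbol{Y})$; $\succeq0$ ($\succ0$) denotes positive semidefinite (definite). *)

(* Defs.v *)
From HB Require Import structures.
From mathcomp Require Import all_boot all_order all_algebra.
From mathcomp Require Import all_classical all_reals ereal.
Set Implicit Arguments. Unset Strict Implicit. Unset Printing Implicit Defensive.
Import Order.TTheory GRing.Theory Num.Theory.
Local Open Scope ring_scope.
Local Open Scope classical_set_scope.

Definition dotv {R : realType} {n : nat} (u v : 'cV[R]_n) : R := (u^T *m v) 0 0.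

Definition is_norm {R : realType} {n : nat} (nrm : 'cV[R]_n -> R) : Prop :=
  [/\ (forall x, 0 <= nrm x), (forall x, nrm x = 0 -> x = 0),
      (forall (a : R) x, nrm (a *: x) = `|a| * nrm x) &
      (forall x y, nrm (x + y) <= nrm x + nrm y)].

Definition dual_norm {R : realType} {n : nat} (nrm : 'cV[R]_n -> R) (v : 'cV[R]_n) : R :=
  sup [set dotv v y | y in [set y | nrm y <= 1]].

Definition psd {R : realType} {n : nat} (M : 'M[R]_n) : Prop :=
  M^T = M /\ forall z : 'cV[R]_n, 0 <= dotv z (M *m z).
Definition pd {R : realType} {n : nat} (M : 'M[R]_n) : Prop :=
  M^T = M /\ forall z : 'cV[R]_n, z != 0 -> 0 < dotv z (M *m z).

Definition ellipsoid {R : realType} {n : nat} (W : 'M[R]_n) (xi0 : 'cV[R]_n) : set 'cV[R]_n :=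
  [set xi | dotv (xi - xi0) (invmx W *m (xi - xi0)) <= 1].

(* f_t(x, xi) = xi^T x + <A, xi xi^T> + b^T x + h,  <X,Y> = tr(XY) *)
Definition fquad {R : realType} {n : nat} (A : 'M[R]_n) (b : 'cV[R]_n) (h : R)
  (x xi : 'cV[R]_n) : R :=
  dotv xi x + \tr (A *m (xi *m xi^T)) + dotv b x + h.

Definition ZC2 {R : realType} {n N T : nat} (nrm : 'cV[R]_n -> R) (eps delta : R)
  (zeta : 'I_N -> 'cV[R]_n) (W : 'M[R]_n) (xi0 : 'cV[R]_n)
  (A : 'I_T -> 'M[R]_n) (b : 'I_T -> 'cV[R]_n) (h : 'I_T -> R) : set 'cV[R]_n :=
  [set x | exists (alpha : 'I_T -> R) (q : 'I_N -> 'I_T -> R) (v : 'I_N -> 'I_T -> 'cV[R]_n),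
     (forall t, 0 < alpha t) /\ (forall i t, 0 <= q i t) /\
     forall i t,
       dual_norm nrm (v i t) * delta + N%:R^-1 * (\sum_(j < N) q j t) <= eps * alpha t /\
       (ereal_sup [set (dotv (v i t) xi - fquad (A t) (b t) (h t) x xi)%:E
                  | xi in ellipsoid W xi0]
        + (alpha t - dotv (v i t) (zeta i) - q i t)%:E <= 0)%E].

Definition lmi_mx {R : realType} {n : nat} (A Wi : 'M[R]_n) (xi0 v x : 'cV[R]_n)
  (u nu : R) : 'M[R]_(n + 1) :=
  let c := (2 * nu) *: (Wi *m xi0) + v - x in
  block_mx (A + nu *: Wi) (- (1/2) *: c)
           (- (1/2) *: c^T) ((u + nu * dotv xi0 (Wi *m xi0) - nu)%:M).

Definition ZSDP {R : realType} {n N T : nat} (nrm : 'cV[R]_n -> R) (eps delta : R)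
  (zeta : 'I_N -> 'cV[R]_n) (W : 'M[R]_n) (xi0 : 'cV[R]_n)
  (A : 'I_T -> 'M[R]_n) (b : 'I_T -> 'cV[R]_n) (h : 'I_T -> R) : set 'cV[R]_n :=
  [set x | exists (alpha : 'I_T -> R) (q : 'I_N -> 'I_T -> R) (v : 'I_N -> 'I_T -> 'cV[R]_n)
              (u : 'I_N -> 'I_T -> R) (nu : 'I_N -> 'I_T -> R),
     (forall t, 0 < alpha t) /\ (forall i t, 0 <= q i t) /\ (forall i t, 0 <= nu i t) /\
     forall i t,
       [/\ dual_norm nrm (v i t) * delta + N%:R^-1 * (\sum_(j < N) q j t) <= eps * alpha t,
           u i t - (dotv (b t) x + h t) + alpha t - dotv (v i t) (zeta i) <= q i t &
           psd (lmi_mx (A t) (invmx W) xi0 (v i t) x (u i t) (nu i t))]].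

(* Main.v *)
Require Import Defs.
From HB Require Import structures.
From mathcomp Require Import all_boot all_order all_algebra.
From mathcomp Require Import all_classical all_reals ereal.
Import Order.TTheory GRing.Theory Num.Theory.
Local Open Scope ring_scope.
Local Open Scope classical_set_scope.
From mathcomp Require Import ring lra.
Section Aux.
Context {R : realType} {n : nat}.
Implicit Types (u w y z : 'cV[R]_n) (M : 'M[R]_n).

Lemma dotvDl u w y : dotv (u + w) y = dotv u y + dotv w y.
Proof. by rewrite /dotv linearD /= mulmxDl mxE. Qed.
Lemma dotvDr u w y : dotv y (u + w) = dotv y u + dotv y w.
Proof. by rewrite /dotv mulmxDr mxE. Qed.
Lemma dotvZl a u y : dotv (a *: u) y = a * dotv u y.
Proof. by rewrite /dotv linearZ /= -scalemxAl mxE. Qed.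
Lemma dotvZr a u y : dotv y (a *: u) = a * dotv y u.
Proof. by rewrite /dotv -scalemxAr mxE. Qed.
Lemma dotvNl u y : dotv (- u) y = - dotv u y.
Proof. by rewrite -scaleN1r dotvZl mulN1r. Qed.
Lemma dotvNr u y : dotv y (- u) = - dotv y u.
Proof. by rewrite -scaleN1r dotvZr mulN1r. Qed.
Lemma dotvBl u w y : dotv (u - w) y = dotv u y - dotv w y.
Proof. by rewrite dotvDl dotvNl. Qed.
Lemma dotvBr u w y : dotv y (u - w) = dotv y u - dotv y w.
Proof. by rewrite dotvDr dotvNr. Qed.
Lemma dotvC u y : dotv u y = dotv y u.
Proof. by rewrite /dotv -[u^T *m y]trmxK trmx_mul trmxK mxE. Qed.
Lemma dotv_tr M u y : dotv (M *m u) y = dotv u (M^T *m y).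
Proof. by rewrite /dotv trmx_mul mulmxA. Qed.
Lemma dotv_sym M u y : M^T = M -> dotv u (M *m y) = dotv y (M *m u).
Proof. by move=> sM; rewrite dotvC dotv_tr sM. Qed.
Lemma dotv0r u : dotv u 0 = 0.
Proof. by rewrite /dotv mulmx0 mxE. Qed.

Lemma tr_quad M y : \tr (M *m (y *m y^T)) = dotv y (M *m y).
Proof. by rewrite mulmxA mxtrace_mulC /mxtrace big_ord1. Qed.
End Aux.
Section L.
Context {R : realType} {n : nat}.
Lemma addE p q (X Y : 'M[R]_(p,q)) i j : (X + Y) i j = X i j + Y i j.
Proof. by rewrite mxE. Qed.
Lemma scaleE p q a (X : 'M[R]_(p,q)) i j : (a *: X) i j = a * X i j.
Proof. by rewrite mxE. Qed.
Lemma scalarE a : (a%:M : 'M[R]_1) 0 0 = a.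
Proof. by rewrite mxE eqxx mulr1n. Qed.

Lemma lmi_gen (A Wi : 'M[R]_n) (xi0 v x z : 'cV[R]_n) (u nu s : R) :
  let c := (2 * nu) *: (Wi *m xi0) + v - x in
  let Z := col_mx z (s%:M : 'M[R]_1) in
  dotv Z (lmi_mx A Wi xi0 v x u nu *m Z) =
  dotv z ((A + nu *: Wi) *m z) - s * dotv z c + (u + nu * dotv xi0 (Wi *m xi0) - nu) * s ^+ 2.
Proof.
move=> c Z.
rewrite /Z /lmi_mx -/c {1}/dotv mul_block_col tr_col_mx mul_row_col tr_scalar_mx.
rewrite !mul_mx_scalar mul_scalar_mx !mulmxDr -!scalemxAr -scalemxAl.
rewrite !addE !scaleE.
have hA : forall (P Q : 'M[R]_1), (P + Q) 0 0 = P 0 0 + Q 0 0 by move=> *; rewrite mxE.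
have hS : forall a (P : 'M[R]_1), (a *: P) 0 0 = a * P 0 0 by move=> *; rewrite mxE.
rewrite hA !hS scalarE.
change ((z^T *m ((A + nu *: Wi) *m z)) 0 0) with (dotv z ((A + nu *: Wi) *m z)).
change ((z^T *m c) 0 0) with (dotv z c).
change ((c^T *m z) 0 0) with (dotv c z).
by rewrite (dotvC c z); field.
Qed.

Lemma rhs_scaled (A Wi : 'M[R]_n) (xi0 v x xi : 'cV[R]_n) (u nu s : R) :
  Wi^T = Wi ->
  let c := (2 * nu) *: (Wi *m xi0) + v - x in
  dotv (s *: xi) ((A + nu *: Wi) *m (s *: xi)) - s * dotv (s *: xi) c
    + (u + nu * dotv xi0 (Wi *m xi0) - nu) * s ^+ 2 =
  s ^+ 2 * ((dotv xi (A *m xi) - dotv (v - x) xi + u)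
            + nu * (dotv (xi - xi0) (Wi *m (xi - xi0)) - 1)).
Proof.
move=> sW c; rewrite /c.
rewrite -!scalemxAr !dotvZl !dotvZr mulmxDl -scalemxAl dotvDr dotvZr.
rewrite !dotvDr ?dotvBr ?dotvZr ?dotvBl mulmxBr ?dotvBr ?dotvBl dotvNr.
rewrite (dotv_sym _ xi0 xi sW) (dotvC v xi) (dotvC x xi).
ring.
Qed.
End L.
Definition convexf {R : realType} {V : lmodType R} (f : V -> R) :=
  forall x y (l : R), 0 <= l <= 1 -> f (l *: x + (1 - l) *: y) <= l * f x + (1 - l) * f y.

Lemma sep2 {R : realType} {V : lmodType R} (p g : V -> R) (x0 : V) :
  g x0 < 0 -> (forall x, g x <= 0 -> 0 <= p x) -> convexf p -> convexf g ->
  exists nu, 0 <= nu /\ forall x, 0 <= p x + nu * g x.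
Proof.
move=> g0 feas cp cg.
pose U := [set p x / (- g x) | x in [set x | g x < 0]].
have U0 : nonempty U by exists (p x0 / (- g x0)); exists x0.
have Ulb : lbound U 0.
  move=> _ [x /= gx <-]; apply: divr_ge0; first exact/feas/ltW.
  by rewrite oppr_ge0 ltW.
have hlb : has_lbound U by exists 0.
exists (inf U); split; first exact: lb_le_inf.
move=> x.
have [gxn|gxp|gx0] := ltgtP (g x) 0.
- have : inf U <= p x / (- g x) by apply: ge_inf => //; exists x.
  rewrite ler_pdivlMr ?oppr_gt0 //; lra.
- have [px0|pxn] := leP 0 (p x).
    by apply: addr_ge0 => //; apply: mulr_ge0 => //; [exact: lb_le_inf | exact: ltW].
  suff : - p x / g x <= inf U by rewrite ler_pdivrMr //; lra.
  apply: lb_le_inf => // _ [y /= gy <-].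
  pose l := g x / (g x - g y).
  have hd : 0 < g x - g y by lra.
  have l01 : 0 <= l <= 1.
    apply/andP; split; first by rewrite divr_ge0 // ltW.
    by rewrite ler_pdivrMr //; lra.
  have e1 : l * g y + (1 - l) * g x = 0.
    rewrite /l; field; lra.
  have hz : g (l *: y + (1 - l) *: x) <= 0 by rewrite -e1; exact: cg.
  have := feas _ hz; have := cp y x l l01 => h1 h2.
  have h3 : 0 <= l * p y + (1 - l) * p x by apply: le_trans h2 h1.
  have e2 : l * p y + (1 - l) * p x = (g x * p y - g y * p x) / (g x - g y).
    rewrite /l; field; lra.
  rewrite e2 in h3.
  have h4 : 0 <= g x * p y - g y * p x.
    by have := mulr_ge0 h3 (ltW hd); rewrite divfK // gt_eqF.
  rewrite ler_pdivrMr // mulrAC ler_pdivlMr ?oppr_gt0 //; nra.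
- by rewrite gx0 mulr0 addr0; apply: feas; rewrite gx0.
Qed.
Section M.
Context {R : realType} {n : nat}.

Lemma dotv0l (y : 'cV[R]_n) : dotv 0 y = 0.
Proof. by rewrite /dotv trmx0 mul0mx mxE. Qed.

Lemma quad_convex (M : 'M[R]_n) (a e : 'cV[R]_n) (k : R) :
  (forall z, 0 <= dotv z (M *m z)) ->
  convexf (fun xi => dotv (xi - a) (M *m (xi - a)) + dotv e xi + k).
Proof.
move=> hM x y l /andP[l0 l1].
have -> : l *: x + (1 - l) *: y - a = l *: (x - a) + (1 - l) *: (y - a).
  by apply/matrixP=> i j; rewrite !mxE; ring.
rewrite dotvDr !dotvZr.
move: (x - a) (y - a) => X Y.
have hXY := hM (X - Y).
rewrite mulmxDr -!scalemxAr !dotvDl !dotvZl !dotvDr !dotvZr.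
rewrite mulmxBr !dotvBl !dotvBr in hXY.
have l1' : 0 <= 1 - l by lra.
have := mulr_ge0 (mulr_ge0 l0 l1') hXY.
nra.
Qed.

Lemma lmi_sym (A Wi : 'M[R]_n) (xi0 v x : 'cV[R]_n) (u nu : R) :
  A^T = A -> Wi^T = Wi -> (lmi_mx A Wi xi0 v x u nu)^T = lmi_mx A Wi xi0 v x u nu.
Proof.
move=> sA sW; rewrite /lmi_mx tr_block_mx linearD /= linearZ /= sA sW.
by rewrite !linearZ /= trmxK tr_scalar_mx.
Qed.

Lemma pd_nonneg (W : 'M[R]_n) : pd W -> forall y, 0 <= dotv y (W *m y).
Proof.
move=> [_ pW] y; case: (eqVneq y 0) => [->|y0]; first by rewrite dotv0l.
exact/ltW/pW.
Qed.

Lemma inv_psd (W : 'M[R]_n) : pd W -> psd (invmx W).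
Proof.
move=> hW; have [sW _] := hW; split; first by rewrite trmx_inv sW.
move=> z; case: (boolP (W \in unitmx)) => hu; last first.
  by rewrite invmx_out ?inE //; exact: pd_nonneg.
have -> : z = W *m (invmx W *m z) by rewrite mulmxA mulmxV // mul1mx.
by rewrite mulKmx // dotv_tr sW; exact: pd_nonneg.
Qed.

Lemma decomp (Z : 'cV[R]_(n + 1)) : Z = col_mx (usubmx Z) ((dsubmx Z 0 0)%:M).
Proof. by rewrite -mx11_scalar vsubmxK. Qed.

Lemma key (A Wi : 'M[R]_n) (xi0 v x : 'cV[R]_n) (u : R) : psd A -> psd Wi ->
  (forall xi, dotv (xi - xi0) (Wi *m (xi - xi0)) <= 1 ->
     dotv (v - x) xi - dotv xi (A *m xi) <= u) ->
  exists nu, 0 <= nu /\ psd (lmi_mx A Wi xi0 v x u nu).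
Proof.
move=> [sA pA] [sW pW] H.
pose p xi := dotv (xi - 0) (A *m (xi - 0)) + dotv (- (v - x)) xi + u.
pose g xi := dotv (xi - xi0) (Wi *m (xi - xi0)) + dotv 0 xi + (-1).
have [nu [nu0 hnu]] : exists nu, 0 <= nu /\ forall xi, 0 <= p xi + nu * g xi.
  apply: (@sep2 _ _ p g xi0).
  - by rewrite /g subrr mulmx0 dotv0r dotv0l !add0r ltrN10.
  - move=> xi; rewrite /g /p dotv0l subr0 dotvNl => hg.
    have := H xi; lra.
  - exact: quad_convex.
  - exact: quad_convex.
exists nu; split=> //; split; first exact: lmi_sym.
move=> Z; rewrite [Z]decomp lmi_gen.
set s := dsubmx Z 0 0; set z := usubmx Z.
case: (eqVneq s 0) => [->|s0].
  rewrite mul0r subr0 expr0n /= mulr0 addr0 mulmxDl -scalemxAl dotvDr dotvZr.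
  by apply: addr_ge0 => //; apply: mulr_ge0.
have := rhs_scaled A Wi xi0 v x (s^-1 *: z) u nu s sW.
rewrite scalerA mulfV // scale1r => ->.
apply: mulr_ge0; first exact: sqr_ge0.
have := hnu (s^-1 *: z); rewrite /p /g subr0 dotvNl dotv0l; lra.
Qed.

Lemma key2 (A Wi : 'M[R]_n) (xi0 v x : 'cV[R]_n) (u nu : R) : Wi^T = Wi ->
  0 <= nu -> psd (lmi_mx A Wi xi0 v x u nu) ->
  forall xi, dotv (xi - xi0) (Wi *m (xi - xi0)) <= 1 ->
     dotv (v - x) xi - dotv xi (A *m xi) <= u.
Proof.
move=> sW nu0 [_ hP] xi hxi.
have := hP (col_mx (1 *: xi) ((1 : R)%:M)).
rewrite lmi_gen rhs_scaled // expr1n mul1r => h.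
have : 0 <= nu * (1 - dotv (xi - xi0) (Wi *m (xi - xi0))).
  by apply: mulr_ge0 => //; lra.
lra.
Qed.

End M.

Lemma sup_iff {R : realType} {n : nat} (S : set 'cV[R]_n) (F : 'cV[R]_n -> R) (k : R) :
  (ereal_sup [set (F xi)%:E | xi in S] + k%:E <= 0)%E <-> (forall xi, S xi -> F xi + k <= 0).
Proof.
split.
- move=> H xi Sxi.
  have h1 : ((F xi)%:E <= ereal_sup [set (F xi)%:E | xi in S])%E.
    by apply: ereal_sup_ubound; exists xi.
  rewrite -lee_fin EFinD; apply: le_trans H; exact: leeD2r.
- move=> H.
  have h1 : (ereal_sup [set (F xi)%:E | xi in S] <= (- k)%:E)%E.
    apply: ge_ereal_sup => _ [xi Sxi <-]; rewrite lee_fin.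
    have := H xi Sxi; lra.
  apply: le_trans (leeD2r _ h1) _; rewrite -EFinD lee_fin; lra.
Qed.

Theorem proposition3 (R : realType) (n N T : nat) (nrm : 'cV[R]_n -> R)
  (eps delta : R) (zeta : 'I_N -> 'cV[R]_n) (W : 'M[R]_n) (xi0 : 'cV[R]_n)
  (A : 'I_T -> 'M[R]_n) (b : 'I_T -> 'cV[R]_n) (h : 'I_T -> R) :
  is_norm nrm -> 0 < eps < 1 -> 0 < delta -> pd W -> (forall t, psd (A t)) ->
  ZC2 nrm eps delta zeta W xi0 A b h = ZSDP nrm eps delta zeta W xi0 A b h.
Proof.
move=> _ _ _ hW hA.
have hWi := inv_psd W hW; have sWi := hWi.1.
apply/seteqP; split => x /=.
- move=> [alpha [q [v [ha [hq H]]]]].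
  pose U i t := dotv (b t) x + h t - alpha t + dotv (v i t) (zeta i) + q i t.
  have hk : forall it : 'I_N * 'I_T, exists nu, 0 <= nu /\
      psd (lmi_mx (A it.2) (invmx W) xi0 (v it.1 it.2) x (U it.1 it.2) nu).
    move=> [i t]; apply: key; [exact: hA | exact: hWi | ].
    move=> xi hxi; have [_ hs] := H i t.
    have := (sup_iff _ _ _).1 hs xi hxi.
    rewrite /fquad tr_quad dotvBl (dotvC x xi) /U /=; lra.
  have [f hf] := choice hk.
  exists alpha, q, v, U, (fun i t => f (i, t)).
  split=> //; split=> //; split; first by move=> i t; exact: (hf (i, t)).1.
  move=> i t; have [h1 _] := H i t; split => //; last exact: (hf (i, t)).2.
  rewrite /U; lra.
- move=> [alpha [q [v [u [nu [ha [hq [hnu H]]]]]]]].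
  exists alpha, q, v; split=> //; split=> // i t.
  have [h1 h2 h3] := H i t; split => //.
  apply/sup_iff => xi hxi.
  have := key2 _ _ _ _ _ _ _ sWi (hnu i t) h3 xi hxi.
  rewrite /fquad tr_quad dotvBl (dotvC x xi); lra.
Qed.
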